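(* There exists a function $f:\mathbb{N}\to\mathbb{N}$ such that for every field $\mathbb{F}$ and every matrix $A$ over $\mathbb{F}$ (with at least one column), $\mathrm{dsd}(M(A))\le\mathrm{dd}(M(A))\le f(\mathrm{dsd}(M(A)))$.
   Context: $M(A)$ is the column matroid of $A$. A matroid is connected if any two elements lie in a common circuit; components are maximal connected restrictions. Deletion-depth: $\mathrm{dd}(M)=1$ if $M$ has a single element; if $M$ is disconnected, $\mathrm{dd}(M)$ is the maximum over components; if $M$ is connected, $\mathrm{dd}(M)=1+\min_{e}\mathrm{dd}(M\setminus e)$. Deletion$^*$-depth of a matrix $B$ with $n$ columns: $\mathrm{dsd}(M(B))=0$ if the rank of $M(B)$ equals its number of elements; otherwise if $M(B)$ is disconnected, $\mathrm{dsd}(M(B))$ is the maximum of $\mathrm{dsd}(M(B_C))$ over components $C$ ($B_C$ the submatrix of columns in $C$); otherwise $\mathrm{dsd}(M(B))=1+\min_{v\in\mathbb{F}^n}\mathrm{dsd}(M(B\oplus v^\top))$, where $B\oplus v^\top$ is $B$ with row $v^\top$ appended. *)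

(* Defs.v *)
From HB Require Import structures.
From mathcomp Require Import all_boot all_order all_algebra.
From Stdlib Require Import ClassicalEpsilon.
Set Implicit Arguments. Unset Strict Implicit. Unset Printing Implicit Defensive.
Import GRing.Theory.
Local Open Scope ring_scope.

Section ColumnMatroid.
Variables (F : fieldType) (n : nat).

(* The matroid M(B) has ground set 'I_n (columns of B). A subset S of
   columns is treated as the restriction M(B)|S, i.e. the column matroid
   of the submatrix B_S. *)

(* B with the columns outside X replaced by zero; its rank is the rank of
   the set X of columns of B. *)
Definition colres m (B : 'M[F]_(m, n)) (X : {set 'I_n}) : 'M[F]_(m, n) :=
  \matrix_(i, j) if j \in X then B i j else 0.

Definition indep m (B : 'M[F]_(m, n)) (X : {set 'I_n}) : bool :=
  \rank (colres B X) == #|X|.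

Definition circuit m (B : 'M[F]_(m, n)) (S C : {set 'I_n}) : bool :=
  [&& C \subset S, ~~ indep B C &
      [forall D : {set 'I_n}, (D \proper C) ==> indep B D]].

Definition connected m (B : 'M[F]_(m, n)) (S : {set 'I_n}) : bool :=
  [forall e in S, forall f in S, (e != f) ==>
     [exists C : {set 'I_n}, [&& circuit B S C, e \in C & f \in C]]].

Definition component m (B : 'M[F]_(m, n)) (S C : {set 'I_n}) : bool :=
  [&& C \subset S, C != set0, connected B C &
      [forall D : {set 'I_n}, ((C \proper D) && (D \subset S)) ==> ~~ connected B D]].

Inductive dd_le m (B : 'M[F]_(m, n)) : {set 'I_n} -> nat -> Prop :=
| dd_single (S : {set 'I_n}) k : #|S| = 1%N -> (1 <= k)%N -> dd_le B S k
| dd_disc (S : {set 'I_n}) k : #|S| <> 1%N -> ~~ connected B S ->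
    (forall C : {set 'I_n}, component B S C -> dd_le B C k) -> dd_le B S k
| dd_conn (S : {set 'I_n}) k (e : 'I_n) : #|S| <> 1%N -> connected B S -> e \in S ->
    dd_le B (S :\ e) k -> dd_le B S k.+1.

Definition dd m (B : 'M[F]_(m, n)) (S : {set 'I_n}) : nat :=
  epsilon (inhabits 0%N) (fun k => dd_le B S k /\ forall j, dd_le B S j -> (k <= j)%N).

(* dsd_le B S k  <->  dsd(M(B_S)) <= k.  Appending the row v^T to B_S is
   modelled by col_mx B v (entries of v outside S are irrelevant);
   B_C for a component C is modelled by restricting to C. *)
Inductive dsd_le : forall m, 'M[F]_(m, n) -> {set 'I_n} -> nat -> Prop :=
| dsd_indep m (B : 'M[F]_(m, n)) (S : {set 'I_n}) k : indep B S -> dsd_le B S k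
| dsd_disc m (B : 'M[F]_(m, n)) (S : {set 'I_n}) k : ~~ indep B S -> ~~ connected B S ->
    (forall C : {set 'I_n}, component B S C -> dsd_le B C k) -> dsd_le B S k
| dsd_conn m (B : 'M[F]_(m, n)) (S : {set 'I_n}) k (v : 'rV[F]_n) : ~~ indep B S -> connected B S ->
    dsd_le (col_mx B v) S k -> dsd_le B S k.+1.

Definition dsd m (B : 'M[F]_(m, n)) (S : {set 'I_n}) : nat :=
  epsilon (inhabits 0%N) (fun k => dsd_le B S k /\ forall j, dsd_le B S j -> (k <= j)%N).

End ColumnMatroid.

(* Main.v *)
Require Import Defs.
From HB Require Import structures.
From mathcomp Require Import all_boot all_order all_algebra.
From Stdlib Require Import Classical ClassicalEpsilon.
From mathcomp Require Import zify.
Set Implicit Arguments. Unset Strict Implicit. Unset Printing Implicit Defensive.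
Import GRing.Theory.
Local Open Scope ring_scope.


Section Basics.
Variables (F : fieldType) (n : nat).

Definition Dm (X : {set 'I_n}) : 'M[F]_n := diag_mx (\row_j (j \in X)%:R).
Definition rsupp (u : 'rV[F]_n) : {set 'I_n} := [set j | u 0 j != 0].

Lemma colresE m (B : 'M[F]_(m, n)) X : colres B X = B *m Dm X.
Proof.
apply/matrixP=> i j; rewrite /colres /Dm mul_mx_diag !mxE.
by case: (j \in X); rewrite ?mulr1 ?mulr0.
Qed.

Lemma DmM X Y : Dm X *m Dm Y = Dm (X :&: Y).
Proof.
rewrite /Dm mulmx_diag; congr diag_mx; apply/rowP=> j; rewrite !mxE in_setI.
by case: (j \in X); case: (j \in Y); rewrite ?mulr1 ?mulr0 ?mul0r.
Qed.

Lemma Dm_tr X : (Dm X)^T = Dm X.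
Proof. exact: tr_diag_mx. Qed.

Lemma Dm_entry X i j : Dm X i j = ((i == j) && (j \in X))%:R.
Proof.
rewrite /Dm !mxE; case: eqP => [->|] /=; rewrite ?mulr1n ?mulr0n //.
Qed.

Lemma subDm (u : 'rV[F]_n) X : (u <= Dm X)%MS = (rsupp u \subset X).
Proof.
apply/idP/idP.
  case/submxP=> w ->; apply/subsetP=> j; rewrite inE /Dm mul_mx_diag !mxE.
  by case: (j \in X) => //; rewrite mulr0 eqxx.
move=> sX; have ->: u = u *m Dm X; last exact: submxMl.
apply/rowP=> j; rewrite /Dm mul_mx_diag !mxE.
case jX: (j \in X); rewrite ?mulr1 ?mulr0 //.
apply/eqP; apply: contraFT jX => nz; apply: (subsetP sX); by rewrite inE.
Qed.

Lemma Dm_sum X : Dm X = \sum_(j in X) delta_mx j j.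
Proof.
apply/matrixP=> i k; rewrite Dm_entry summxE.
under eq_bigr do rewrite mxE.
case: (eqVneq i k) => [<-|ne] /=.
  case iX: (i \in X).
    rewrite (bigD1 i) //= !eqxx big1 ?addr0 // => j /andP[_ ne].
    by rewrite eq_sym (negbTE ne).
  rewrite big1 // => j jX.
  have /negbTE -> : i != j by apply: contraFN iX => /eqP ->.
  by [].
rewrite big1 // => j _.
case: (eqVneq i j) => [eij|] //=; case: (eqVneq k j) => [ekj|] //=.
by rewrite eij ekj eqxx in ne.
Qed.

Lemma rank_Dm X : \rank (Dm X) = #|X|.
Proof.
apply/eqP; rewrite eqn_leq; apply/andP; split.
  rewrite Dm_sum -sum1_card.
  apply: (big_rec2 (fun (r : nat) (A : 'M[F]_n) => \rank A <= r)%N).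
    by rewrite mxrank0.
  move=> j r A _ h; apply: leq_trans (mxrank_add _ _) _.
  by rewrite mxrank_delta add1n.
have h1 : Dm X + Dm (~: X) = 1%:M.
  apply/matrixP=> i j; rewrite [in LHS]mxE !Dm_entry mxE in_setC.
  by case: (i == j); case: (j \in X); rewrite /= ?addr0 ?add0r.
have := mxrank_add (Dm X) (Dm (~: X)); rewrite h1 mxrank1.
have h2 : (\rank (Dm (~: X)) <= #|~: X|)%N.
  rewrite Dm_sum -sum1_card.
  apply: (big_rec2 (fun (r : nat) (A : 'M[F]_n) => \rank A <= r)%N).
    by rewrite mxrank0.
  move=> j r A _ h; apply: leq_trans (mxrank_add _ _) _.
  by rewrite mxrank_delta add1n.
have hc := cardsC X; rewrite card_ord in hc.
move=> h3; lia.
Qed.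

Lemma indepP m (B : 'M[F]_(m, n)) X :
  indep B X <-> (forall u : 'rV[F]_n, u *m B^T = 0 -> rsupp u \subset X -> u = 0).
Proof.
rewrite /indep colresE -mxrank_tr trmx_mul Dm_tr.
have := mxrank_mul_ker (Dm X) B^T; rewrite rank_Dm => <-.
rewrite -{1}[\rank (Dm X *m B^T)]addn0 eqn_add2l eq_sym mxrank_eq0.
split.
  move/eqP=> h u uB uX; apply/eqP; rewrite -submx0 -h sub_capmx subDm uX.
  by rewrite sub_kermx uB eqxx.
move=> h; apply/eqP; apply/eqP; apply: contraT => nz.
have : nz_row (Dm X :&: kermx B^T)%MS != 0 by rewrite nz_row_eq0.
have := nz_row_sub (Dm X :&: kermx B^T)%MS; rewrite sub_capmx => /andP[s1 s2].
have e := h _ (sub_kermxP s2) (etrans (esym (subDm _ _)) s1).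
by rewrite e eqxx.
Qed.

End Basics.
Arguments Dm {F n} X.


Section Circuits.
Variables (F : fieldType) (n m : nat) (B : 'M[F]_(m, n)).

Definition Circ (C : {set 'I_n}) : bool :=
  ~~ indep B C && [forall D : {set 'I_n}, (D \proper C) ==> indep B D].

Lemma circuitE (S C : {set 'I_n}) : circuit B S C = (C \subset S) && Circ C.
Proof. by []. Qed.

Lemma indep_sub (X Y : {set 'I_n}) : indep B Y -> X \subset Y -> indep B X.
Proof.
move=> /indepP h sXY; apply/indepP => u uB uX; apply: h uB _.
exact: subset_trans uX sXY.
Qed.

Lemma indep0 : indep B set0.
Proof.
apply/indepP => u _ s0; apply/rowP => j; rewrite mxE.
apply/eqP; apply: contraT => nz.
have : j \in rsupp u by rewrite inE.
by move/(subsetP s0); rewrite inE.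
Qed.

Lemma depP (X : {set 'I_n}) : ~~ indep B X ->
  exists u : 'rV[F]_n, [/\ u != 0, u *m B^T = 0 & rsupp u \subset X].
Proof.
move=> nX; apply: NNPP => hn; move/negP: nX; apply; apply/indepP => u uB uX.
apply: NNPP => nz; apply: hn; exists u; split => //; exact/eqP.
Qed.

Lemma supp_eq0 (u : 'rV[F]_n) : (rsupp u == set0) = (u == 0).
Proof.
apply/idP/idP.
  move/eqP=> h; apply/eqP/rowP => j; rewrite mxE; apply/eqP; apply: contraT => nz.
  have : j \in rsupp u by rewrite inE.
  by rewrite h inE.
by move/eqP ->; apply/eqP/setP => j; rewrite !inE mxE eqxx.
Qed.

Lemma CircP C : Circ C -> exists u : 'rV[F]_n, u *m B^T = 0 /\ rsupp u = C.
Proof.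
case/andP=> nC /forallP mC; have [u [nz uB uC]] := depP nC.
exists u; split => //; apply/eqP; rewrite eqEproper uC /=.
apply/negP => pr; have := implyP (mC (rsupp u)) pr.
by move/indepP => h; move/eqP: nz; apply; apply: h.
Qed.

Lemma Circ_min (C D : {set 'I_n}) : Circ C -> Circ D -> D \subset C -> D = C.
Proof.
move=> /andP[_ /forallP mC] /andP[nD _] sDC.
apply/eqP; rewrite eqEproper sDC /=; apply/negP => pr.
by move: (implyP (mC D) pr); rewrite (negbTE nD).
Qed.

Lemma Circ_dep C : Circ C -> ~~ indep B C.
Proof. by case/andP. Qed.

Lemma Circ_n0 C : Circ C -> C != set0.
Proof.
move=> /Circ_dep; apply: contra => /eqP ->; exact: indep0.
Qed.

Lemma Dec (u : 'rV[F]_n) i : u *m B^T = 0 -> i \in rsupp u ->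
  exists C, [/\ Circ C, i \in C & C \subset rsupp u].
Proof.
move Hk : #|rsupp u| => k; elim: k {-2}k (leqnn k) u Hk => [|k IH] k' lek u Hk uB iu.
  have : (0 < #|rsupp u|)%N by apply/card_gt0P; exists i.
  by rewrite Hk; move: lek; rewrite leqn0 => /eqP ->.
case: (boolP [forall D : {set 'I_n}, (D \proper rsupp u) ==> indep B D]) => hD.
  exists (rsupp u); split => //; apply/andP; split => //.
  apply/negP => /indepP h; have u0 := h u uB (subxx _).
  by move: iu; rewrite u0 inE mxE eqxx.
move/forallPn: hD => [D]; rewrite negb_imply => /andP[pD nD].
have [z [nz zB zD]] := depP nD.
have zsu : rsupp z \proper rsupp u := sub_proper_trans zD pD.
case: (boolP (i \in rsupp z)) => iz.
  have lz : (#|rsupp z| <= k)%N.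
    rewrite -ltnS; apply: leq_trans lek; rewrite -Hk; exact: proper_card.
  have [C [C1 C2 C3]] := IH #|rsupp z| lz z erefl zB iz.
  exists C; split => //; exact: subset_trans C3 (proper_sub zsu).
have : rsupp z != set0 by rewrite supp_eq0.
case/set0Pn => j jz.
set u' := u - (u 0 j / z 0 j) *: z.
have u'B : u' *m B^T = 0 by rewrite mulmxBl -scalemxAl zB scaler0 uB subr0.
have zj : z 0 j != 0 by move: jz; rewrite inE.
have su' : rsupp u' \subset rsupp u :\ j.
  apply/subsetP => l; rewrite !inE !mxE.
  case: (eqVneq l j) => [->|nlj] /=.
    by rewrite mulfVK // subrr eqxx.
  apply: contraNneq => ul.
  have : z 0 l == 0.
    apply: contraT => zl; have : l \in rsupp z by rewrite inE.
    move/(subsetP (proper_sub zsu)); by rewrite inE ul eqxx.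
  by move/eqP ->; rewrite mulr0 ul subrr.
have iu' : i \in rsupp u'.
  rewrite inE !mxE; move: iz; rewrite inE negbK => /eqP ->.
  by rewrite mulr0 subr0; move: iu; rewrite inE.
have ju : j \in rsupp u := subsetP (proper_sub zsu) j jz.
have lu : (#|rsupp u'| <= k)%N.
  rewrite -ltnS; apply: leq_trans lek; rewrite -Hk.
  apply: leq_ltn_trans (subset_leq_card su') _.
  by rewrite (cardsD1 j (rsupp u)) ju.
have [C [C1 C2 C3]] := IH #|rsupp u'| lu u' erefl u'B iu'.
exists C; split => //; apply: subset_trans C3 (subset_trans su' _).
exact: subD1set.
Qed.


Lemma SE (C1 C2 : {set 'I_n}) y f : Circ C1 -> Circ C2 -> y \in C1 -> y \in C2 ->
  f \in C1 -> f \notin C2 ->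
  exists C3, [/\ Circ C3, f \in C3 & C3 \subset (C1 :|: C2) :\ y].
Proof.
move=> c1 c2 y1 y2 f1 f2.
have [u1 [u1B s1]] := CircP c1; have [u2 [u2B s2]] := CircP c2.
set mu := u2 0 y *: u1 - u1 0 y *: u2.
have muB : mu *m B^T = 0.
  by rewrite mulmxBl -!scalemxAl u1B u2B !scaler0 subrr.
have nz1 : u1 0 f != 0 by move: f1; rewrite -s1 inE.
have z2 : u2 0 f = 0 by apply/eqP; move: f2; rewrite -s2 inE negbK.
have ny2 : u2 0 y != 0 by move: y2; rewrite -s2 inE.
have fmu : f \in rsupp mu by rewrite inE !mxE z2 mulr0 subr0 mulf_neq0.
have [C [C1' C2' C3']] := Dec muB fmu.
exists C; split => //; apply: subset_trans C3' _.
apply/subsetP => l; rewrite !inE !mxE.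
case: (eqVneq l y) => [->|nly] /=; first by rewrite mulrC subrr eqxx.
apply: contraNT; rewrite negb_or -s1 -s2 !inE !negbK => /andP[/eqP -> /eqP ->].
by rewrite !mulr0 subrr.
Qed.

Lemma meetP (A C : {set 'I_n}) w : w \in A -> w \in C -> ~~ [disjoint A & C].
Proof. move=> a c; apply/negP => h; by rewrite (disjointFr h a) in c. Qed.

Lemma TR (x z : 'I_n) : forall k (C1 C2 : {set 'I_n}), (#|C1 :|: C2| <= k)%N ->
  Circ C1 -> Circ C2 -> ~~ [disjoint C1 & C2] -> x \in C1 -> z \in C2 ->
  exists C, [/\ Circ C, x \in C, z \in C & C \subset C1 :|: C2].
Proof.
elim=> [|k IH] C1 C2 hk c1 c2 dj x1 z2.
  have : (0 < #|C1 :|: C2|)%N by apply/card_gt0P; exists x; rewrite inE x1.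
  by move: hk; rewrite leqn0 => /eqP ->.
case: (boolP (x \in C2)) => x2.
  by exists C2; split => //; exact: subsetUr.
case: (boolP (z \in C1)) => z1.
  by exists C1; split => //; exact: subsetUl.
case/pred0Pn: dj => y /andP[y1 y2].
have [nu [cnu xnu snu]] := SE c1 c2 y1 y2 x1 x2.
have [nu' [cnu' znu' snu']] := SE c2 c1 y2 y1 z2 z1.
rewrite setUC in snu'.
set U := C1 :|: C2 in snu snu' hk *.
have snuU : nu \subset U := subset_trans snu (subD1set _ _).
have snu'U : nu' \subset U := subset_trans snu' (subD1set _ _).
case: (boolP (z \in nu)) => znu; first by exists nu.
case: (boolP (x \in nu')) => xnu'; first by exists nu'.
have [w [wnu w2 w1]] : exists w, [/\ w \in nu, w \in C2 & w \notin C1].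
  apply: NNPP => hn.
  have sub1 : nu \subset C1.
    apply/subsetP => l lnu; apply: NNPP => l1; apply: hn; exists l; split => //; last exact/negP.
    have := subsetP snuU l lnu; rewrite inE; case/orP => // /(negP l1) [].
  have := Circ_min c1 cnu sub1 => e.
  have ynu : y \in nu by rewrite e.
  by move: (subsetP snu y ynu); rewrite !inE eqxx.
have [w' [wnu' w'1 w'2]] : exists w, [/\ w \in nu', w \in C1 & w \notin C2].
  apply: NNPP => hn.
  have sub2 : nu' \subset C2.
    apply/subsetP => l lnu; apply: NNPP => l2; apply: hn; exists l; split => //; last exact/negP.
    have := subsetP snu'U l lnu; rewrite inE; case/orP => // /(negP l2) [].
  have := Circ_min c2 cnu' sub2 => e.
  have ynu : y \in nu' by rewrite e.
  by move: (subsetP snu' y ynu); rewrite !inE eqxx.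
have ltU (V : {set 'I_n}) : V \subset U :\ y -> (#|V| <= k)%N.
  move=> sV; rewrite -ltnS; apply: leq_trans hk.
  apply: leq_ltn_trans (subset_leq_card sV) _.
  have yU : y \in U := subsetP (subsetUl C1 C2) y y1.
  by rewrite (cardsD1 y U) yU.
case: (ltnP #|nu :|: C2| #|U|) => h1.
  have h1' : (#|nu :|: C2| <= k)%N by rewrite -ltnS; exact: leq_trans h1 hk.
  have [C [cC xC zC sC]] := IH nu C2 h1' cnu c2 (meetP wnu w2) xnu z2.
  exists C; split => //; apply: subset_trans sC _; by rewrite subUset snuU subsetUr.
have e1 : nu :|: C2 = U.
  apply/eqP; rewrite eqEcard h1 andbT subUset snuU; exact: subsetUr.
have w'nu : w' \in nu.
  have : w' \in U := subsetP (subsetUl C1 C2) w' w'1.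
  by rewrite -e1 inE (negbTE w'2) orbF.
case: (ltnP #|C1 :|: nu'| #|U|) => h2.
  have h2' : (#|C1 :|: nu'| <= k)%N by rewrite -ltnS; exact: leq_trans h2 hk.
  have [C [cC xC zC sC]] := IH C1 nu' h2' c1 cnu' (meetP w'1 wnu') x1 znu'.
  exists C; split => //; apply: subset_trans sC _; by rewrite subUset snu'U subsetUl.
have e2 : C1 :|: nu' = U.
  apply/eqP; rewrite eqEcard h2 andbT subUset snu'U andbT; exact: subsetUl.
have wnu2 : w \in nu'.
  have : w \in U := subsetP (subsetUr C1 C2) w w2.
  by rewrite -e2 inE (negbTE w1).
have s3 : nu :|: nu' \subset U :\ y by rewrite subUset snu snu'.
have [C [cC xC zC sC]] := IH nu nu' (ltU _ s3) cnu cnu' (meetP wnu wnu2) xnu znu'.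
exists C; split => //; apply: subset_trans sC _; by rewrite subUset snuU snu'U.
Qed.


End Circuits.


Section Conn.
Variables (F : fieldType) (n m : nat) (B : 'M[F]_(m, n)).

Lemma connP (T : {set 'I_n}) : reflect (forall e f, e \in T -> f \in T -> e != f ->
   exists C : {set 'I_n}, [/\ C \subset T, Circ B C, e \in C & f \in C]) (connected B T).
Proof.
apply: (iffP idP).
  move=> /forall_inP h e f eT fT nef; have := h e eT => /forall_inP /(_ f fT).
  rewrite nef /= => /existsP [C]; rewrite circuitE => /and3P[/andP[sC cC] eC fC].
  by exists C.
move=> h; apply/forall_inP => e eT; apply/forall_inP => f fT; apply/implyP => nef.
have [C [sC cC eC fC]] := h e f eT fT nef.
by apply/existsP; exists C; rewrite circuitE sC cC eC fC.
Qed.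

Lemma conn_circ (C : {set 'I_n}) : Circ B C -> connected B C.
Proof. move=> cC; apply/connP => e f eC fC _; by exists C. Qed.

Lemma conn_small (T : {set 'I_n}) : (#|T| <= 1)%N -> connected B T.
Proof.
move=> h; apply/connP => e f eT fT nef; exfalso.
have : (1 < #|T|)%N.
  rewrite (cardsD1 e T) eT add1n ltnS; apply/card_gt0P; exists f.
  by rewrite !inE eq_sym nef.
by rewrite ltnNge h.
Qed.

Lemma connU (T1 T2 : {set 'I_n}) : connected B T1 -> connected B T2 -> ~~ [disjoint T1 & T2] ->
  connected B (T1 :|: T2).
Proof.
move=> /connP h1 /connP h2 dj; apply/connP.
have [g /andP[g1 g2]] := pred0Pn dj.
have key e f : e \in T1 -> f \in T2 -> e != f ->
    exists C : {set 'I_n}, [/\ C \subset T1 :|: T2, Circ B C, e \in C & f \in C].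
  move=> e1 f2 nef.
  case: (eqVneq e g) => [eg | neg].
    have [C [sC cC eC fC]] := h2 g f g2 f2 (ltac:(by rewrite -eg)).
    exists C; split; rewrite ?eg //; exact: subset_trans sC (subsetUr _ _).
  case: (eqVneq f g) => [fg | nfg].
    have [C [sC cC eC fC]] := h1 e g e1 g1 (ltac:(by rewrite -fg)).
    exists C; split; rewrite ?fg //; exact: subset_trans sC (subsetUl _ _).
  have [C1 [sC1 cC1 eC1 gC1]] := h1 e g e1 g1 neg.
  have [C2 [sC2 cC2 gC2 fC2]] := h2 g f g2 f2 (ltac:(by rewrite eq_sym)).
  have [C [cC eC fC sC]] := TR (k := #|C1 :|: C2|) (leqnn _) cC1 cC2 (meetP gC1 gC2) eC1 fC2.
  exists C; split => //; apply: subset_trans sC _; exact: setUSS.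
move=> e f; rewrite !inE => /orP[e1|e2] /orP[f1|f2] nef.
- have [C [sC cC eC fC]] := h1 e f e1 f1 nef.
  exists C; split => //; exact: subset_trans sC (subsetUl _ _).
- exact: key.
- have [C [sC cC eC fC]] := key f e f1 e2 (ltac:(by rewrite eq_sym)).
  by exists C.
- have [C [sC cC eC fC]] := h2 e f e2 f2 nef.
  exists C; split => //; exact: subset_trans sC (subsetUr _ _).
Qed.

Lemma compP (S C : {set 'I_n}) : component B S C ->
  [/\ C \subset S, C != set0, connected B C &
      forall D : {set 'I_n}, C \proper D -> D \subset S -> ~~ connected B D].
Proof.
case/and4P=> h1 h2 h3 /forallP h4; split => // D pD sD.
by have := h4 D; rewrite pD sD.
Qed.

Lemma compI (S C : {set 'I_n}) : C \subset S -> C != set0 -> connected B C ->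
  (forall D : {set 'I_n}, C \proper D -> D \subset S -> ~~ connected B D) -> component B S C.
Proof.
move=> h1 h2 h3 h4; apply/and4P; split => //; apply/forallP => D.
apply/implyP => /andP[pD sD]; exact: h4.
Qed.

Lemma comp_exists (S : {set 'I_n}) : forall k (C : {set 'I_n}), (#|S :\: C| <= k)%N ->
  C \subset S -> C != set0 -> connected B C ->
  exists C' : {set 'I_n}, component B S C' /\ C \subset C'.
Proof.
elim=> [|k IH] C hk sC nC cC;
  (case: (boolP [exists D : {set 'I_n}, [&& C \proper D, D \subset S & connected B D]]);
   last first).
- move=> hn; exists C; split => //; apply: compI => // D pD sD.
  by apply: contra hn => cD; apply/existsP; exists D; rewrite pD sD cD.
- case/existsP => D /and3P[pD sD cD]; exfalso.
  have := proper_card pD; have := subset_leq_card sD.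
  move: hk; rewrite (cardsDS sC); lia.
- move=> hn; exists C; split => //; apply: compI => // D pD sD.
  by apply: contra hn => cD; apply/existsP; exists D; rewrite pD sD cD.
case/existsP => D /and3P[pD sD cD].
have nD : D != set0.
  apply: contraTneq (proper_sub pD) => ->; rewrite subset0; exact: nC.
have hD : (#|S :\: D| <= k)%N.
  have := proper_card pD; have := subset_leq_card sD.
  move: hk; rewrite (cardsDS sC) (cardsDS sD); lia.
have [C' [c' sDC']] := IH D hD sD nD cD.
exists C'; split => //; exact: subset_trans (proper_sub pD) sDC'.
Qed.

Lemma comp_of (S C : {set 'I_n}) : C \subset S -> C != set0 -> connected B C ->
  exists C' : {set 'I_n}, component B S C' /\ C \subset C'.
Proof. move=> *; exact: (@comp_exists S #|S :\: C|). Qed.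

Lemma comp_eq (S C1 C2 : {set 'I_n}) : component B S C1 -> component B S C2 ->
  ~~ [disjoint C1 & C2] -> C1 = C2.
Proof.
move=> /compP[s1 n1 c1 m1] /compP[s2 n2 c2 m2] dj.
have cU := connU c1 c2 dj.
have sU : C1 :|: C2 \subset S by rewrite subUset s1 s2.
have e1 : C1 = C1 :|: C2.
  apply/eqP; rewrite eqEproper subsetUl /=; apply/negP => pr.
  by move: (m1 _ pr sU); rewrite cU.
have e2 : C2 = C1 :|: C2.
  apply/eqP; rewrite eqEproper subsetUr /=; apply/negP => pr.
  by move: (m2 _ pr sU); rewrite cU.
by rewrite e1 -e2.
Qed.

Lemma comp_circ (S C C' : {set 'I_n}) : component B S C -> Circ B C' -> C' \subset S ->
  ~~ [disjoint C & C'] -> C' \subset C.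
Proof.
move=> /compP[s1 n1 c1 m1] cC' sC' dj.
have cU := connU c1 (conn_circ cC') dj.
have sU : C :|: C' \subset S by rewrite subUset s1 sC'.
have e1 : C = C :|: C'.
  apply/eqP; rewrite eqEproper subsetUl /=; apply/negP => pr.
  by move: (m1 _ pr sU); rewrite cU.
by rewrite e1 subsetUr.
Qed.

Lemma comp_cover (S : {set 'I_n}) j : j \in S -> exists C : {set 'I_n}, component B S C /\ j \in C.
Proof.
move=> jS.
have [C' [c' s']] := @comp_of S [set j] (ltac:(by rewrite sub1set)) (ltac:(by apply/set0Pn; exists j; rewrite set11))
   (conn_small (eq_leq (cards1 j))).
exists C'; split => //; apply: (subsetP s'); exact: set11.
Qed.

Lemma comp_restr (S T C : {set 'I_n}) : component B S C -> C \subset T -> T \subset S ->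
  component B T C.
Proof.
move=> /compP[s1 n1 c1 m1] sCT sTS; apply: compI => // D pD sD.
exact: m1 pD (subset_trans sD sTS).
Qed.

Lemma comp_conn (S C : {set 'I_n}) : component B S C -> connected B S -> C = S.
Proof.
move=> /compP[s1 n1 c1 m1] cS; apply/eqP; rewrite eqEproper s1 /=.
by apply/negP => pr; move: (m1 _ pr (subxx _)); rewrite cS.
Qed.

Lemma indep_conn (Y X : {set 'I_n}) : indep B Y -> X \subset Y -> connected B X ->
  (#|X| <= 1)%N.
Proof.
move=> iY sXY /connP cX; rewrite leqNgt; apply/negP => h.
have [e eX] : exists e, e \in X.
  by apply/card_gt0P; apply: leq_trans h.
have [f fX] : exists f, f \in X :\ e.
  by apply/card_gt0P; move: h; rewrite (cardsD1 e X) eX.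
move: fX; rewrite !inE => /andP[nfe fX].
have [C [sC cC _ _]] := cX e f eX fX (ltac:(by rewrite eq_sym)).
by move: (Circ_dep cC); rewrite (indep_sub iY (subset_trans sC sXY)).
Qed.

End Conn.


Section Sep.
Variables (F : fieldType) (n m : nat) (B : 'M[F]_(m, n)).

Lemma mulDmE (u : 'rV[F]_n) (X : {set 'I_n}) j : (u *m Dm X) 0 j = if j \in X then u 0 j else 0.
Proof. rewrite /Dm mul_mx_diag !mxE; by case: (j \in X); rewrite ?mulr1 ?mulr0. Qed.

Lemma mulDm_id (u : 'rV[F]_n) (X : {set 'I_n}) : rsupp u \subset X -> u *m Dm X = u.
Proof.
move=> sX; apply/rowP => j; rewrite mulDmE; case jX: (j \in X) => //.
apply/esym/eqP; apply: contraFT jX => nz; apply: (subsetP sX); by rewrite inE.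
Qed.

Lemma mulDm_0 (u : 'rV[F]_n) (X : {set 'I_n}) : [disjoint rsupp u & X] -> u *m Dm X = 0.
Proof.
move=> dj; apply/rowP => j; rewrite mulDmE mxE; case jX: (j \in X) => //.
apply/eqP; apply: contraT => nz.
have ju : j \in rsupp u by rewrite inE.
by rewrite (disjointFr dj ju) in jX.
Qed.

Lemma SK (S C : {set 'I_n}) : component B S C -> forall k (u : 'rV[F]_n),
  (#|rsupp u| <= k)%N -> u *m B^T = 0 -> rsupp u \subset S -> u *m Dm C *m B^T = 0.
Proof.
move=> cC; elim=> [|k IH] u hk uB uS.
  have : rsupp u == set0 by rewrite -cards_eq0 -leqn0.
  by rewrite supp_eq0 => /eqP ->; rewrite !mul0mx.
case: (eqVneq u 0) => [->|nz]; first by rewrite !mul0mx.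
have : rsupp u != set0 by rewrite supp_eq0.
case/set0Pn => i iu.
have [C' [cC' iC' sC']] := Dec uB iu.
have [z [zB sz]] := CircP cC'.
have zC : z *m Dm C *m B^T = 0.
  case: (boolP [disjoint C' & C]) => dj.
    by rewrite mulDm_0 ?sz // mul0mx.
  have sub := comp_circ cC cC' (subset_trans sC' uS) (ltac:(by rewrite disjoint_sym)).
  by rewrite mulDm_id ?sz.
have zi : z 0 i != 0 by rewrite -sz inE in iC'.
set u' := u - (u 0 i / z 0 i) *: z.
have u'B : u' *m B^T = 0 by rewrite mulmxBl -scalemxAl zB scaler0 uB subr0.
have su' : rsupp u' \subset rsupp u :\ i.
  apply/subsetP => l; rewrite !inE !mxE.
  case: (eqVneq l i) => [->|nli] /=.
    by rewrite mulfVK // subrr eqxx.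
  apply: contraNneq => ul.
  have : z 0 l == 0.
    apply: contraT => zl; have : l \in rsupp z by rewrite inE.
    rewrite sz => /(subsetP sC'); by rewrite inE ul eqxx.
  by move/eqP ->; rewrite mulr0 ul subrr.
have hk' : (#|rsupp u'| <= k)%N.
  rewrite -ltnS; apply: leq_trans hk.
  apply: leq_ltn_trans (subset_leq_card su') _.
  by rewrite (cardsD1 i (rsupp u)) iu.
have := IH u' hk' u'B (subset_trans su' (subset_trans (subD1set _ _) uS)).
have -> : u = u' + (u 0 i / z 0 i) *: z by rewrite /u' subrK.
by rewrite !mulmxDl -!scalemxAl zC scaler0 addr0.
Qed.

Lemma RS1 (S C : {set 'I_n}) : component B S C -> (colres B C <= colres B S)%MS.
Proof.
move=> cC; have sCS : C \subset S by case/compP: cC.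
rewrite submxE; move: (cokermx (colres B S)) (mulmx_coker (colres B S)) => K hK.
apply/eqP; apply: trmx_inj; rewrite trmx0; apply/row_matrixP => i.
rewrite row0 colresE trmx_mul [(B *m _)^T]trmx_mul Dm_tr row_mul.
set r := row i K^T.
have rSB : (r *m Dm S) *m B^T = 0.
  have : row i ((colres B S *m K)^T) = 0 by rewrite hK trmx0 row0.
  by rewrite colresE trmx_mul [(B *m _)^T]trmx_mul Dm_tr row_mul mulmxA.
have su : rsupp (r *m Dm S) \subset S.
  apply/subsetP => j; rewrite inE mulDmE; by case: (j \in S); rewrite ?eqxx.
have := SK cC (leqnn _) rSB su.
by rewrite -[r *m Dm S *m Dm C]mulmxA DmM (setIidPr sCS) mulmxA.
Qed.

Lemma RS2 (S : {set 'I_n}) :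
  colres B S = \sum_(C : {set 'I_n} | component B S C) colres B C.
Proof.
apply/matrixP => i j; rewrite summxE /colres !mxE.
under eq_bigr do rewrite mxE.
case jS: (j \in S).
  have [C0 [c0 j0]] := comp_cover B jS.
  rewrite (bigD1 C0) //= j0 big1 ?addr0 // => C /andP[cC nC].
  case jC: (j \in C) => //; exfalso; move/negP: nC; apply.
  apply/eqP; apply: (comp_eq cC c0); exact: (meetP jC j0).
rewrite big1 // => C cC; case jC: (j \in C) => //.
by case/compP: cC => /subsetP /(_ j jC); rewrite jS.
Qed.

End Sep.

Section Span.
Variables (F : fieldType) (n : nat).

Definition spn (s : seq 'rV[F]_n) : 'M[F]_n := \big[addsmx/0]_(u <- s) <<u>>%MS.

Lemma spn_sup (s : seq 'rV[F]_n) u : u \in s -> (u <= spn s)%MS.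
Proof.
elim: s => // x s IH; rewrite inE /spn big_cons => /orP[/eqP ->|us].
  by apply: submx_trans (addsmxSl _ _); rewrite genmxE.
exact: submx_trans (IH us) (addsmxSr _ _).
Qed.

Lemma spn_sub (s : seq 'rV[F]_n) p (W : 'M[F]_(p, n)) :
  (forall u, u \in s -> (u <= W)%MS) -> (spn s <= W)%MS.
Proof.
elim: s => [|x s IH] h; rewrite /spn ?big_nil ?sub0mx // big_cons.
rewrite addsmx_sub genmxE h ?mem_head //; apply: IH => u us; apply: h.
by rewrite inE us orbT.
Qed.

Lemma spn_cat (s1 s2 : seq 'rV[F]_n) p (W : 'M[F]_(p, n)) :
  (W <= spn s1)%MS -> (W <= spn (s1 ++ s2))%MS.
Proof.
move=> h; apply: submx_trans h _; apply: spn_sub => u us; apply: spn_sup.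
by rewrite mem_cat us.
Qed.

Lemma spn_catr (s1 s2 : seq 'rV[F]_n) p (W : 'M[F]_(p, n)) :
  (W <= spn s2)%MS -> (W <= spn (s1 ++ s2))%MS.
Proof.
move=> h; apply: submx_trans h _; apply: spn_sub => u us; apply: spn_sup.
by rewrite mem_cat us orbT.
Qed.

End Span.


Section EP.
Variables (F : fieldType) (n : nat).

Lemma colres_col m (B : 'M[F]_(m, n)) (v : 'rV[F]_n) X :
  colres (col_mx B v) X = col_mx (colres B X) (colres v X).
Proof. by rewrite !colresE mul_col_mx. Qed.

Lemma addsplit p (w : 'rV[F]_n) (W : 'M[F]_(p, n)) (u0 : 'rV[F]_n) :
  (w <= W + u0)%MS -> exists (a : 'M[F]_(1, p)) (c : F), w = a *m W + c *: u0.
Proof.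
case/sub_addsmxP => [[a b]] /= ->; exists a, (b 0 0).
by rewrite {1}(mx11_scalar b) mul_scalar_mx.
Qed.

Lemma colres_sub m (B : 'M[F]_(m, n)) (X Y : {set 'I_n}) : Y \subset X ->
  colres B Y = colres B X *m Dm Y.
Proof. by move=> s; rewrite !colresE -mulmxA DmM (setIidPr s). Qed.

Lemma supp_lin (u w : 'rV[F]_n) (c : F) : rsupp (u - c *: w) \subset rsupp u :|: rsupp w.
Proof.
apply/subsetP => j; rewrite !inE !mxE; apply: contraR; rewrite negb_or !negbK.
by case/andP => /eqP -> /eqP ->; rewrite mulr0 subrr.
Qed.

Definition Eprop m (B : 'M[F]_(m, n)) (S : {set 'I_n}) (c : nat) :=
  exists s : seq 'rV[F]_n, (forall u, u \in s -> (#|rsupp u| <= c)%N /\ (u <= colres B S)%MS)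
    /\ (colres B S <= spn s)%MS.

Lemma Eprop_mono m (B : 'M[F]_(m, n)) S c c' : (c <= c')%N -> Eprop B S c -> Eprop B S c'.
Proof.
move=> le [s [h1 h2]]; exists s; split => // u us; have [a b] := h1 u us.
split => //; exact: leq_trans le.
Qed.

Lemma Eprop_indep m (B : 'M[F]_(m, n)) S : indep B S -> Eprop B S 1.
Proof.
move=> iS.
have sD : (colres B S <= Dm S)%MS by rewrite colresE submxMl.
have eD : (Dm S <= colres B S)%MS.
  rewrite -(mxrank_leqif_sup sD) rank_Dm; by move/eqP: iS => ->.
exists [seq delta_mx 0 j | j <- enum S]; split.
  move=> u /mapP [j]; rewrite mem_enum => jS ->; split.
    have sub : rsupp (delta_mx 0 j : 'rV[F]_n) \subset [set j].
      apply/subsetP => l; rewrite !inE mxE eqxx /=; by case: (l == j); rewrite ?eqxx.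
    apply: leq_trans (subset_leq_card sub) _; by rewrite cards1.
  apply: submx_trans eD; rewrite subDm; apply/subsetP => l.
  rewrite !inE mxE eqxx /=; case E: (l == j); [by rewrite (eqP E) | by rewrite eqxx].
apply: submx_trans sD _; apply/row_subP => i.
case iS': (i \in S).
  apply: spn_sup; apply/mapP; exists i; rewrite ?mem_enum //.
  apply/rowP => l; rewrite [LHS]mxE Dm_entry mxE eqxx /=.
  case E: (i == l); rewrite /= ?(eqP E) ?eqxx //=; last first.
    by case: eqP => // e; rewrite e eqxx in E.
  by rewrite -(eqP E) iS'.
have -> : row i (Dm S : 'M[F]_n) = 0.
  apply/rowP => l; rewrite [LHS]mxE Dm_entry mxE.
  case E: (i == l) => //=; by rewrite -(eqP E) iS'.
exact: sub0mx.
Qed.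


Lemma subB_sub p q (A C : 'M[F]_(p, n)) (W : 'M[F]_(q, n)) :
  (A <= W)%MS -> (C <= W)%MS -> (A - C <= W)%MS.
Proof. move=> h1 h2; apply: addmx_sub h1 _; rewrite -scaleN1r; exact: scalemx_sub. Qed.

Lemma Eprop_comb m (B : 'M[F]_(m, n)) S c :
  (forall C, component B S C -> Eprop B C c) -> Eprop B S c.
Proof.
move=> H.
have L : forall l : seq {set 'I_n}, (forall C, C \in l -> component B S C) ->
  exists s : seq 'rV[F]_n, (forall u, u \in s -> (#|rsupp u| <= c)%N /\ (u <= colres B S)%MS)
    /\ (forall C, C \in l -> (colres B C <= spn s)%MS).
  elim=> [|C l IH] h; first by exists [::].
  have [s1 [h1 h2]] := IH (fun C' C'l => h C' (ltac:(by rewrite inE C'l orbT))).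
  have cC := h C (mem_head _ _).
  have [s0 [h3 h4]] := H C cC.
  exists (s0 ++ s1); split.
    move=> u; rewrite mem_cat => /orP[us|us]; last exact: h1.
    have [a b] := h3 u us; split => //; exact: submx_trans b (RS1 cC).
  move=> C'; rewrite inE => /orP[/eqP ->|C'l]; first exact: spn_cat.
  exact: spn_catr (h2 C' C'l).
have [s [h1 h2]] := L (enum [set C | component B S C]) (ltac:(by move=> C; rewrite mem_enum inE)).
exists s; split => //; rewrite RS2; apply: summx_sub => C cC; apply: h2.
by rewrite mem_enum inE.
Qed.

Lemma Eprop_step m (B : 'M[F]_(m, n)) (v : 'rV[F]_n) S c :
  Eprop (col_mx B v) S c -> Eprop B S (c + c).
Proof.
rewrite /Eprop colres_col; set W := colres B S; set v' := colres v S.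
move=> [s' [h1 h2]].
have WW' : (W <= col_mx W v')%MS by rewrite -addsmxE addsmxSl.
have v'W' : (v' <= col_mx W v')%MS by rewrite -addsmxE addsmxSr.
case: (boolP (v' <= W)%MS) => vW.
  exists s'; split; last exact: submx_trans WW' h2.
  move=> u us; have [a b] := h1 u us; split; first by apply: leq_trans a (leq_addr _ _).
  by apply: submx_trans b _; rewrite col_mx_sub submx_refl vW.
have [u0 [u0s u0W]] : exists u0, u0 \in s' /\ ~~ (u0 <= W)%MS.
  apply: NNPP => hn; move/negP: vW; apply.
  apply: submx_trans v'W' (submx_trans h2 _); apply: spn_sub => u us.
  apply: NNPP => nu; apply: hn; exists u; split => //; exact/negP.
have [cu0 su0] := h1 u0 u0s.
move: su0; rewrite -addsmxE => /addsplit [a0 [c0 e0]].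
have c0n : c0 != 0.
  apply: contra u0W => /eqP c00; rewrite e0 c00 scale0r addr0; exact: submxMl.
have ev' : v' = c0^-1 *: (u0 - a0 *m W).
  by rewrite e0 addrC addKr scalerA mulVf // scale1r.
have L : forall l : seq 'rV[F]_n, (forall u, u \in l -> u \in s') ->
  exists t : seq 'rV[F]_n, (forall x, x \in t -> (#|rsupp x| <= c + c)%N /\ (x <= W)%MS)
    /\ (forall u, u \in l -> (u <= spn t + u0)%MS).
  elim=> [|u l IH] hl; first by exists [::].
  have [t [t1 t2]] := IH (fun u' u'l => hl u' (ltac:(by rewrite inE u'l orbT))).
  have us : u \in s' := hl u (mem_head _ _).
  have [cu su] := h1 u us.
  move: su; rewrite -addsmxE => /addsplit [a [b e]].
  set x := u - (b / c0) *: u0.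
  have xW : (x <= W)%MS.
    have -> : x = a *m W - (b / c0) *: (a0 *m W).
      by rewrite /x e e0 scalerDr scalerA mulfVK // opprD addrA addrAC addrK.
    apply: subB_sub; first exact: submxMl.
    apply: scalemx_sub; exact: submxMl.
  exists (x :: t); split.
    move=> y; rewrite inE => /orP[/eqP ->|yt]; last first.
      have [p q] := t1 y yt; split => //; exact: leq_trans p (leq_addr _ _).
    split => //; apply: leq_trans (subset_leq_card (supp_lin _ _ _)) _.
    apply: leq_trans (leq_card_setU _ _) _; exact: leq_add.
  move=> u'; rewrite inE => /orP[/eqP ->|u'l].
    have -> : u = x + (b / c0) *: u0 by rewrite /x subrK.
    apply: addmx_sub.
      apply: submx_trans (addsmxSl _ _); apply: spn_sup; exact: mem_head.
    apply: scalemx_sub; exact: addsmxSr.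
  apply: submx_trans (t2 u' u'l) _; apply: addsmxS => //.
  apply: spn_sub => y yt; apply: spn_sup; by rewrite inE yt orbT.
have [t [t1 t2]] := L s' (fun u us => us).
exists t; split => //; apply/row_subP => i.
have wW : (row i W <= W)%MS := row_sub _ _.
have : (row i W <= spn t + u0)%MS.
  apply: submx_trans (submx_trans wW (submx_trans WW' h2)) _.
  by apply: spn_sub => u us; apply: t2.
case/addsplit => a [k e].
case: (eqVneq k 0) => [k0|kn].
  by rewrite e k0 scale0r addr0; exact: submxMl.
exfalso; move/negP: u0W; apply.
have -> : u0 = k^-1 *: (row i W - a *m spn t).
  by rewrite e addrC addKr scalerA mulVf // scale1r.
apply: scalemx_sub; apply: subB_sub => //.
apply: submx_trans (submxMl _ _) _; apply: spn_sub => x xt; by have [] := t1 x xt.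
Qed.

Lemma U1 : forall m (B : 'M[F]_(m, n)) S k, dsd_le B S k -> Eprop B S (2 ^ k).
Proof.
move=> m B S k H; elim: H => {m B S k}.
- move=> m B S k iS; apply: Eprop_mono (Eprop_indep iS); by rewrite expn_gt0.
- move=> m B S k _ _ _ IH; exact: Eprop_comb.
- move=> m B S k v _ _ _ IH; rewrite expnS mul2n -addnn; exact: Eprop_step IH.
Qed.

End EP.


Section Transfer.
Variables (F : fieldType) (n : nat).
Implicit Types (X Y Z C D S T : {set 'I_n}).

Section Two.
Variables (m1 m2 : nat) (B1 : 'M[F]_(m1, n)) (B2 : 'M[F]_(m2, n)) (T : {set 'I_n}).
Hypothesis HT : forall Y, Y \subset T -> indep B1 Y = indep B2 Y.

Lemma Circ_eq C : C \subset T -> Circ B1 C = Circ B2 C.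
Proof.
move=> sC; rewrite /Circ HT //; congr andb; apply: eq_forallb => D.
case pD: (D \proper C) => //=; apply: HT; exact: subset_trans (proper_sub pD) sC.
Qed.

Lemma conn_eq X : X \subset T -> connected B1 X = connected B2 X.
Proof.
move=> sX; apply/connP/connP => h e f eX fX nef.
  have [C [sC cC eC fC]] := h e f eX fX nef.
  by exists C; split => //; rewrite -Circ_eq // (subset_trans sC sX).
have [C [sC cC eC fC]] := h e f eX fX nef.
by exists C; split => //; rewrite Circ_eq // (subset_trans sC sX).
Qed.

Lemma comp_eqv C : component B1 T C = component B2 T C.
Proof.
apply/idP/idP.
  case/compP => s1 n1 c1 m1'; apply: compI => //; first by rewrite -conn_eq.
  by move=> D pD sD; rewrite -conn_eq //; apply: m1'.
case/compP => s1 n1 c1 m1'; apply: compI => //; first by rewrite conn_eq.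
by move=> D pD sD; rewrite conn_eq //; apply: m1'.
Qed.

End Two.

Lemma dd_mono m (B : 'M[F]_(m, n)) T k : dd_le B T k -> dd_le B T k.+1.
Proof.
elim => {T k}.
- move=> S k h1 h2; apply: dd_single => //; exact: leqW.
- move=> S k h1 h2 _ IH; exact: dd_disc.
- move=> S k e h1 h2 h3 _ IH; exact: dd_conn IH.
Qed.

Lemma dd_monoL m (B : 'M[F]_(m, n)) T k k' : (k <= k')%N -> dd_le B T k -> dd_le B T k'.
Proof.
move=> /subnKC <-; elim: (k' - k)%N => [|j IH] h; first by rewrite addn0.
by rewrite addnS; apply: dd_mono; apply: IH.
Qed.

Lemma dd_tr m1 m2 (B1 : 'M[F]_(m1, n)) (B2 : 'M[F]_(m2, n)) T k :
  dd_le B1 T k -> (forall Y, Y \subset T -> indep B1 Y = indep B2 Y) -> dd_le B2 T k.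
Proof.
elim => {T k}.
- move=> S k h1 h2 _; exact: dd_single.
- move=> S k h1 h2 _ IH HT; apply: dd_disc => //; first by rewrite -(conn_eq HT).
  move=> C cC; rewrite -(comp_eqv HT) in cC.
  apply: IH => // Y sY; apply: HT; apply: subset_trans sY _; by case/compP: cC.
- move=> S k e h1 h2 h3 _ IH HT; apply: dd_conn h3 _ => //.
    by rewrite -(conn_eq HT).
  apply: IH => Y sY; apply: HT; exact: subset_trans sY (subD1set _ _).
Qed.

Lemma CP m (B : 'M[F]_(m, n)) (X : {set 'I_n}) e k :
  (forall Y, Y \subset X :\ e -> Y != set0 -> dd_le B Y k) ->
  forall Y, Y \subset X -> Y != set0 -> dd_le B Y k.+1.
Proof.
move=> H Y sY nY.
case: (boolP (e \in Y)) => eY; last first.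
  apply: dd_mono; apply: H nY; apply/subsetP => j jY; rewrite !inE (subsetP sY j jY) andbT.
  by apply: contraNneq eY => <-.
have sub (Z : {set 'I_n}) : Z \subset Y -> Z :\ e \subset X :\ e.
  move=> sZ; apply: setSD; exact: subset_trans sZ sY.
case: (eqVneq #|Y| 1%N) => [c1|c1]; first by apply: dd_single.
have nYe : Y :\ e != set0.
  rewrite -card_gt0; move: c1; rewrite (cardsD1 e Y) eY add1n; by case: #|Y :\ e|.
case: (boolP (connected B Y)) => cY.
  apply: (dd_conn (e := e)); [exact/eqP | exact: cY | exact: eY |].
  apply: H => //; exact: sub (subxx _).
apply: dd_disc => //; first exact/eqP.
move=> C cC.
have [sCY nC cCc _] := compP cC.
case: (boolP (e \in C)) => eC; last first.
  apply: dd_mono; apply: H nC; apply/subsetP => j jC; rewrite !inE.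
  rewrite (subsetP (subset_trans sCY sY) j jC) andbT.
  by apply: contraNneq eC => <-.
case: (eqVneq #|C| 1%N) => [cc1|cc1]; first by apply: dd_single.
apply: (dd_conn (e := e)); [exact/eqP | exact: cCc | exact: eC |].
apply: H; first exact: sub sCY.
rewrite -card_gt0; move: cc1; rewrite (cardsD1 e C) eC add1n; by case: #|C :\ e|.
Qed.

End Transfer.


Section Upper.
Variables (F : fieldType) (n : nat).
Implicit Types (X Y Z C D S T : {set 'I_n}).

Lemma CPiter m (B : 'M[F]_(m, n)) X : forall j D k, #|D| = j ->
  (forall Y, Y \subset X :\: D -> Y != set0 -> dd_le B Y k) ->
  forall Y, Y \subset X -> Y != set0 -> dd_le B Y (k + j).
Proof.
elim=> [|j IH] D k hD H.
  move: hD => /eqP; rewrite cards_eq0 => /eqP hD0; rewrite addn0.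
  by move=> Y sY; apply: H; rewrite hD0 setD0.
have [e eD] : exists e, e \in D by apply/card_gt0P; rewrite hD.
have hD' : #|D :\ e| = j by move: hD; rewrite (cardsD1 e D) eD add1n => [[]].
rewrite -addSnnS; apply: (IH (D :\ e)) => // Y sY nY.
apply: (CP (X := X :\: (D :\ e)) (e := e)) => // Z sZ nZ; apply: H => //.
apply: subset_trans sZ _; apply/subsetP => l; rewrite !inE.
case: (eqVneq l e) => [->|] //=; by rewrite andbC; case: (l \in D).
Qed.

Lemma indep_col m (B : 'M[F]_(m, n)) (v : 'rV[F]_n) Y :
  (colres v Y <= colres B Y)%MS -> indep (col_mx B v) Y = indep B Y.
Proof.
move=> h; by rewrite /indep colres_col -addsmxE (addsmx_idPl h).
Qed.

Lemma Dlem m (B : 'M[F]_(m, n)) (v : 'rV[F]_n) S c : Eprop (col_mx B v) S c ->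
  exists D, (#|D| <= c)%N /\
    forall Y, Y \subset S -> [disjoint Y & D] -> (colres v Y <= colres B Y)%MS.
Proof.
rewrite /Eprop colres_col; set W := colres B S; set v' := colres v S.
move=> [s' [h1 h2]].
have v'W' : (v' <= col_mx W v')%MS by rewrite -addsmxE addsmxSr.
case: (boolP (v' <= W)%MS) => vW.
  exists set0; split; first by rewrite cards0.
  move=> Y sY _; rewrite (colres_sub _ sY) (colres_sub B sY); exact: submxMr.
have [u0 [u0s u0W]] : exists u0, u0 \in s' /\ ~~ (u0 <= W)%MS.
  apply: NNPP => hn; move/negP: vW; apply.
  apply: submx_trans v'W' (submx_trans h2 _); apply: spn_sub => u us.
  apply: NNPP => nu; apply: hn; exists u; split => //; exact/negP.
have [cu0 su0] := h1 u0 u0s.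
move: su0; rewrite -addsmxE => /addsplit [a0 [c0 e0]].
have c0n : c0 != 0.
  apply: contra u0W => /eqP c00; rewrite e0 c00 scale0r addr0; exact: submxMl.
have ev' : v' = c0^-1 *: (u0 - a0 *m W).
  by rewrite e0 addrC addKr scalerA mulVf // scale1r.
exists (rsupp u0); split => // Y sY dj.
rewrite (colres_sub _ sY) -/v' ev' -scalemxAl mulmxBl.
rewrite mulDm_0; last by rewrite disjoint_sym.
apply: scalemx_sub; rewrite sub0r -scaleN1r; apply: scalemx_sub.
by rewrite -mulmxA -colres_sub //; exact: submxMl.
Qed.

Lemma dd_indep m (B : 'M[F]_(m, n)) Y : indep B Y -> Y != set0 -> dd_le B Y 1.
Proof.
move=> iY nY; case: (eqVneq #|Y| 1%N) => [c1|c1]; first by apply: dd_single.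
have cY : ~~ connected B Y.
  apply/negP => cY; have := indep_conn iY (subxx _) cY.
  move: c1 nY; rewrite -card_gt0; case: #|Y| => [|[|k]] //.
apply: dd_disc => //; first exact/eqP.
move=> C /compP[sC nC cC _]; apply: dd_single => //.
apply/eqP; rewrite eqn_leq (indep_conn iY sC cC) card_gt0; exact: nC.
Qed.

Lemma U2 : forall m (B : 'M[F]_(m, n)) S k, dsd_le B S k ->
  forall Y, Y \subset S -> Y != set0 -> dd_le B Y (2 ^ k).
Proof.
move=> m B S k H; elim: H => {m B S k}.
- move=> m B S k iS Y sY nY; apply: dd_monoL (dd_indep (indep_sub iS sY) nY).
  by rewrite expn_gt0.
- move=> m B S k _ _ _ IH Y sY nY.
  case: (eqVneq #|Y| 1%N) => [c1|c1]; first by apply: dd_single; rewrite // expn_gt0.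
  case: (boolP (connected B Y)) => cY.
    have [C' [c' sYC']] := comp_of sY nY cY.
    exact: IH c' Y sYC' nY.
  apply: dd_disc => //; first exact/eqP.
  move=> C /compP[sC nC cC _].
  have [C' [c' sCC']] := comp_of (subset_trans sC sY) nC cC.
  exact: IH c' C sCC' nC.
- move=> m B S k v nS cS H IH.
  have [D [cD hD]] := Dlem (U1 H).
  have HT : forall Y, Y \subset S :\: D -> Y != set0 -> dd_le B Y (2 ^ k).
    move=> Y sY nY.
    have sYS : Y \subset S by apply: subset_trans sY (subsetDl _ _).
    apply: (dd_tr (IH Y sYS nY)) => Z sZ; apply: indep_col; apply: hD.
      exact: subset_trans sZ sYS.
    rewrite disjoint_subset; apply/subsetP => l lZ; rewrite inE.
    by have := subsetP (subset_trans sZ sY) l lZ; rewrite inE => /andP[].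
  move=> Y sY nY; have := CPiter (erefl #|D|) HT sY nY.
  apply: dd_monoL; by rewrite expnS mul2n -addnn leq_add2l.
Qed.

End Upper.


Section Lower.
Variables (F : fieldType) (n : nat).
Implicit Types (X Y Z C D S T : {set 'I_n}).

Lemma coloop m (B : 'M[F]_(m, n)) e Y :
  indep (col_mx B (delta_mx 0 e : 'rV[F]_n)) Y = indep (col_mx B (delta_mx 0 e : 'rV[F]_n)) (Y :\ e).
Proof.
apply/idP/idP => h; first exact: indep_sub h (subD1set _ _).
apply/indepP => u uB uY; move/indepP: h; apply => //.
move: uB; rewrite tr_col_mx mul_mx_row => /eqP; rewrite row_mx_eq0 => /andP[_ h2].
apply/subsetP => j ju; rewrite !inE (subsetP uY j ju) andbT.
apply: contraTneq ju => ->; rewrite inE negbK.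
move/eqP: h2 => /matrixP /(_ 0 0); rewrite trmx_delta -colE !mxE => ->.
by rewrite eqxx.
Qed.

Lemma coloop_circ m (B : 'M[F]_(m, n)) e C : Circ (col_mx B (delta_mx 0 e : 'rV[F]_n)) C -> e \notin C.
Proof.
move=> cC; apply/negP => eC.
have /andP[nC /forallP mC] := cC.
have pr : C :\ e \proper C by rewrite properD1.
move: (implyP (mC (C :\ e)) pr); rewrite -coloop => iC.
by rewrite iC in nC.
Qed.

Lemma dsd_comp : forall m (B : 'M[F]_(m, n)) S k, dsd_le B S k ->
  forall C, component B S C -> dsd_le B C k.
Proof.
move=> m B S k H; case: H => {m B S k}.
- move=> m B S k iS C /compP[sC _ _ _]; apply: dsd_indep; exact: indep_sub iS sC.
- move=> m B S k _ _ h C cC; exact: h.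
- move=> m B S k v nS cS h C cC; rewrite (comp_conn cC cS); exact: dsd_conn h.
Qed.

Lemma HTfrom m1 m2 (B1 : 'M[F]_(m1, n)) (B2 : 'M[F]_(m2, n)) S :
  (colres B1 S == colres B2 S)%MS -> forall Y, Y \subset S -> indep B1 Y = indep B2 Y.
Proof.
move/eqmxP => h Y sY; rewrite /indep (colres_sub B1 sY) (colres_sub B2 sY).
by rewrite (eqmxMr (Dm Y) h).
Qed.

Lemma dsd_tr : forall m1 (B1 : 'M[F]_(m1, n)) S k, dsd_le B1 S k ->
  forall m2 (B2 : 'M[F]_(m2, n)), (colres B1 S == colres B2 S)%MS -> dsd_le B2 S k.
Proof.
move=> m1 B1 S k H; elim: H => {m1 B1 S k}.
- move=> m B S k iS m2 B2 h; apply: dsd_indep; by rewrite -(HTfrom h).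
- move=> m B S k nS cS _ IH m2 B2 h; have HT := HTfrom h.
  apply: dsd_disc; first by rewrite -HT.
    by rewrite -(conn_eq HT).
  move=> C cC; rewrite -(comp_eqv HT) in cC; apply: IH => //.
  have sC : C \subset S by case/compP: cC.
  apply/eqmxP; rewrite (colres_sub B sC) (colres_sub B2 sC).
  apply: eqmxMr; exact/eqmxP.
- move=> m B S k v nS cS _ IH m2 B2 h; have HT := HTfrom h.
  apply: (dsd_conn (v := v)); first by rewrite -HT.
    by rewrite -(conn_eq HT).
  apply: IH; rewrite !colres_col -!addsmxE; apply/eqmxP.
  apply: adds_eqmx; [exact/eqmxP | exact: eqmx_refl].
Qed.

Lemma lower m (B : 'M[F]_(m, n)) T k : dd_le B T k -> dsd_le B T k.
Proof.
elim => {T k}.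
- move=> S k c1 k1.
  case: (boolP (indep B S)) => iS; first exact: dsd_indep.
  have [e eS] : exists e, S = [set e] by apply/cards1P/eqP.
  case: k k1 => // k _.
  apply: (dsd_conn (v := (delta_mx 0 e : 'rV[F]_n))) => //.
    by apply: conn_small; rewrite c1.
  apply: dsd_indep; rewrite coloop eS setDv; exact: indep0.
- move=> S k c1 nc _ IH.
  case: (boolP (indep B S)) => iS; first exact: dsd_indep.
  exact: dsd_disc.
- move=> S k e c1 cS eS _ IH.
  case: (boolP (indep B S)) => iS; first exact: dsd_indep.
  apply: (dsd_conn (v := (delta_mx 0 e : 'rV[F]_n))) => //.
  set B' := col_mx B (delta_mx 0 e : 'rV[F]_n).
  have S1 : dsd_le B' (S :\ e) k.
    apply: (dsd_tr IH); rewrite /B' colres_col.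
    have -> : colres (delta_mx 0 e : 'rV[F]_n) (S :\ e) = 0.
      apply/rowP => j; rewrite !mxE; case jS: (j \in S :\ e) => //=.
      move: jS; case: eqP => [->|//]; by rewrite !inE eqxx.
    apply/eqmxP; apply: eqmx_sym; apply: eqmx_trans (eqmx_sym (addsmxE _ _)) _; exact: addsmx0.
  have nS' : S :\ e != set0.
    rewrite -card_gt0; move/eqP: c1; rewrite (cardsD1 e S) eS add1n; by case: #|S :\ e|.
  have ncS : ~~ connected B' S.
    apply/negP => /connP h; have [f] := set0Pn _ nS'; rewrite !inE => /andP[nfe fS].
    have [C [_ cC eC _]] := h e f eS fS (ltac:(by rewrite eq_sym)).
    by rewrite (negbTE (coloop_circ cC)) in eC.
  case: (boolP (indep B' S)) => iS'; first exact: dsd_indep.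
  apply: dsd_disc => // C cC.
  have [sC nC cCc _] := compP cC.
  case: (boolP (e \in C)) => eC.
    apply: dsd_indep; rewrite /B' coloop.
    have -> : C :\ e = set0.
      apply/eqP; apply: contraTT cCc => /set0Pn [f]; rewrite !inE => /andP[nfe fC].
      apply/negP => /connP h.
      have [C0 [_ cC0 eC0 _]] := h e f eC fC (ltac:(by rewrite eq_sym)).
      by rewrite (negbTE (coloop_circ cC0)) in eC0.
    exact: indep0.
  apply: (dsd_comp S1); apply: comp_restr cC _ (subD1set _ _).
  apply/subsetP => j jC; rewrite !inE (subsetP sC j jC) andbT.
  by apply: contraNneq eC => <-.
Qed.

End Lower.

Lemma least_ex (P : nat -> Prop) k0 : P k0 ->
  exists k, P k /\ forall j, P j -> (k <= j)%N.
Proof.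
elim: k0 {-2}k0 (leqnn k0) => [|k IH] k0 hk pk.
  exists k0; split => // j _; move: hk; rewrite leqn0 => /eqP ->; exact: leq0n.
case: (classic (exists j, (j < k0)%N /\ P j)) => [[j [ltj pj]]|hn].
  apply: (IH j) => //; rewrite -ltnS; exact: leq_trans ltj hk.
exists k0; split => // j pj; rewrite leqNgt; apply/negP => ltj; apply: hn.
by exists j.
Qed.

Local Close Scope ring_scope.

Theorem theorem13 :
  exists f : nat -> nat,
    forall (F : fieldType) (m n : nat) (A : 'M[F]_(m, n)),
      (0 < n)%N ->
      (dsd A [set: 'I_n] <= dd A [set: 'I_n] <= f (dsd A [set: 'I_n]))%N.
Proof.
exists (fun k => 2 ^ k)%N => F m n A n0.
have nT : [set: 'I_n] != set0.
  by apply/set0Pn; exists (Ordinal n0); rewrite inE.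
have ddex : dd_le A [set: 'I_n] #|[set: 'I_n]|.
  have H0 : forall Y : {set 'I_n}, Y \subset [set: 'I_n] :\: [set: 'I_n] -> Y != set0 ->
      dd_le A Y 0.
    by move=> Y; rewrite setDv subset0 => /eqP ->; rewrite eqxx.
  have := @CPiter _ _ _ A [set: 'I_n] _ [set: 'I_n] 0%N (erefl _) H0 _ (subxx _) nT; by rewrite add0n.
have dsdex := lower ddex.
have [hd1 hd2] : dsd_le A [set: 'I_n] (dsd A [set: 'I_n]) /\
   forall j, dsd_le A [set: 'I_n] j -> (dsd A [set: 'I_n] <= j)%N.
  exact: (epsilon_spec (inhabits 0%N) (fun k => dsd_le A [set: 'I_n] k /\
     forall j, dsd_le A [set: 'I_n] j -> (k <= j)%N) (least_ex dsdex)).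
have [dd1 dd2] : dd_le A [set: 'I_n] (dd A [set: 'I_n]) /\
   forall j, dd_le A [set: 'I_n] j -> (dd A [set: 'I_n] <= j)%N.
  exact: (epsilon_spec (inhabits 0%N) (fun k => dd_le A [set: 'I_n] k /\
     forall j, dd_le A [set: 'I_n] j -> (k <= j)%N) (least_ex ddex)).
apply/andP; split.
  apply: hd2; exact: lower dd1.
apply: dd2; exact: U2 hd1 _ (subxx _) nT.
Qed.
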